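(* For every $n\geq 2$, $\deg(\mathrm{nib}:\{0,1\}^n\to\{0,1\}^n)=3/2$.
   Context: For finite sets $X,Y$ and $f:X\to Y$, $\deg(f)=\frac{1}{|X|}\sum_{y\in Y}|f^{-1}(y)|^2$. For a binary word $w\in\{0,1\}^n$, $\mathrm{nib}(w)$ is obtained from $w$ by replacing the first (leftmost) occurrence of the factor $10$ in $w$ with $01$; if $w$ contains no factor $10$, then $\mathrm{nib}(w)=w$. *)

(* Defs.v *)
From mathcomp Require Import all_boot all_order all_algebra.
Set Implicit Arguments. Unset Strict Implicit. Unset Printing Implicit Defensive.
Import Order.TTheory GRing.Theory Num.Theory.

Definition deg (X Y : finType) (f : X -> Y) : rat :=
  ((\sum_(y : Y) (#|[set x | f x == y]| ^ 2)%N)%:R / #|X|%:R)%R.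

(* nib on binary words (true = 1, false = 0): replace the leftmost factor 10
   by 01; identity if there is no factor 10. *)
Fixpoint nib_seq (w : seq bool) : seq bool :=
  match w with
  | true :: false :: t => false :: true :: t
  | b :: t => b :: nib_seq t
  | [::] => [::]
  end.

Lemma size_nib_seq (w : seq bool) : size (nib_seq w) = size w.
Proof.
elim: w => [|[|] t IH] //=; case: t IH => [|[|] t'] //= IH; by rewrite IH.
Qed.

Definition nib (n : nat) (w : n.-tuple bool) : n.-tuple bool :=
  Tuple (introT eqP (etrans (size_nib_seq w) (size_tuple w))).

(* Main.v *)
Require Import Defs.
From mathcomp Require Import all_boot all_order all_algebra.
Import Order.TTheory GRing.Theory Num.Theory.

Fixpoint allw (n : nat) : seq (seq bool) :=
  if n is m.+1 then map (cons false) (allw m) ++ map (cons true) (allw m)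
  else [:: [::]].

Lemma cons_inj (b : bool) : injective (cons b). Proof. by move=> x y []. Qed.

Lemma mem_allw n s : (s \in allw n) = (size s == n).
Proof.
elim: n s => [|n IH] s.
  by case: s => [|b s] //=; rewrite inE.
rewrite /= (@mem_cat (seq bool)); case: s => [|b s] /=.
  by apply/negbTE; rewrite negb_or; apply/andP; split; apply/mapP => -[].
case: b; rewrite (@mem_map (seq bool) (seq bool) _ (@cons_inj _)) IH eqSS.
  by have -> : (true :: s \in [seq false :: i | i <- allw n]) = false
    by apply/negbTE/mapP => -[x _ []].
have -> : (false :: s \in [seq true :: i | i <- allw n]) = false
    by apply/negbTE/mapP => -[x _ []].
by rewrite orbF.
Qed.

Lemma uniq_allw n : uniq (allw n).
Proof.
elim: n => //= n IH; rewrite cat_uniq !map_inj_uniq // ?IH ?andbT /=;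
  try by move=> x y [].
by apply/hasPn => s /mapP [x _ ->]; apply/mapP => -[].
Qed.

Lemma size_allw n : size (allw n) = 2 ^ n.
Proof. by elim: n => //= n IH; rewrite size_cat !size_map IH expnS mul2n addnn. Qed.

Lemma tsum (F : seq bool -> nat) n :
  \sum_(x : n.-tuple bool) F (val x) = \sum_(s <- allw n) F s.
Proof.
transitivity (\sum_(s <- map val (enum {: n.-tuple bool})) F s).
  by rewrite big_map big_enum.
apply: perm_big; apply: uniq_perm.
- by rewrite map_inj_uniq ?enum_uniq //; apply: val_inj.
- exact: uniq_allw.
move=> s; rewrite mem_allw; apply/mapP/idP => [[t _ ->]|Hs].
  by rewrite size_tuple.
by exists (Tuple Hs); rewrite ?mem_enum.
Qed.

Fixpoint gt (y : seq bool) : nat :=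
  match y with [::] => 1 | true :: t => gt t | false :: t => head false t end.
Fixpoint g (y : seq bool) : nat :=
  match y with [::] => 1 | false :: y1 => g y1 + head false y1 | true :: y1 => gt y1 end.

Lemma count_eq n z : size z = n -> count (fun x => x == z) (allw n) = 1.
Proof.
move=> Hz; rewrite (count_uniq_mem _ (uniq_allw n)) mem_allw Hz eqxx //.
Qed.

Lemma count_eqc n z (c : bool) : (c -> size z = n) ->
  count (fun x => (x == z) && c) (allw n) = c.
Proof.
case: c => [H|_]; last by rewrite (eq_count (a2 := pred0)) ?count_pred0 // => x; rewrite andbF.
rewrite (eq_count (a2 := fun x => x == z)); first exact: count_eq (H isT).
by move=> x; rewrite andbT.
Qed.

Lemma cnt_tf m y2 : size y2 = m ->
  count (fun x => nib_seq (true :: x) == false :: y2) (allw m) = head false y2.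
Proof.
move=> Hs.
rewrite -(@count_eqc m (false :: behead y2) (head false y2)).
  apply: eq_count => -[|[] t] /=; rewrite ?eqseq_cons //; case: y2 Hs => [|d y3] //= _.
  - by rewrite andbF.
  - by rewrite eqseq_cons andbC; case: d.
by case: y2 Hs => //= d y3 ->.
Qed.

Lemma fibT m y : size y = m ->
  count (fun x => nib_seq (true :: x) == true :: y) (allw m) = gt y.
Proof.
elim: m y => [|m IH] [|c y2] //= [Hs]; rewrite count_cat !count_map.
rewrite (eq_count (a2 := pred0)) ?count_pred0 /=; last by [].
case: c => /=.
  by rewrite -(IH _ Hs); apply: eq_count => x /=; rewrite eqseq_cons.
by rewrite -(@cnt_tf _ _ Hs); apply: eq_count => x /=; rewrite eqseq_cons.
Qed.

Lemma fib n y : size y = n ->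
  count (fun x => nib_seq x == y) (allw n) = g y.
Proof.
elim: n y => [|n IH] [|b y1] //= [Hs]; rewrite count_cat !count_map.
case: b => /=.
  rewrite (eq_count (a1 := preim _ _) (a2 := pred0)) ?count_pred0 /=; last by [].
  exact: fibT.
rewrite (@cnt_tf _ _ Hs) -(IH _ Hs); congr (_ + _).
Qed.

From mathcomp Require Import zify.

Lemma sumS (F : seq bool -> nat) n :
  \sum_(y <- allw n.+1) F y = \sum_(y <- allw n) F (false :: y) + \sum_(y <- allw n) F (true :: y).
Proof. by rewrite /= big_cat !big_map. Qed.

Lemma gt_le1 y : gt y <= 1.
Proof. by elim: y => [|[] t IH] //=; case: t {IH} => [|[]]. Qed.

Definition U n := \sum_(y <- allw n) gt y.
Definition H n := \sum_(y <- allw n) (head false y : nat).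
Definition W n := \sum_(y <- allw n) g y * head false y.
Definition S n := \sum_(y <- allw n) g y ^ 2.

Lemma HS n : H n.+1 = 2 ^ n.
Proof.
rewrite /H sumS /= big1 // add0n.
by rewrite -(size_allw n) -sum1_size.
Qed.

Lemma US n : U n.+1 = H n + U n.
Proof. by rewrite /U sumS. Qed.

Lemma WS n : W n.+1 = U n.
Proof. by rewrite /W sumS /= big1 ?add0n ?/U; [apply: eq_bigr => y _; rewrite muln1| move=> y _; rewrite muln0]. Qed.

Lemma SS n : S n.+1 = S n + 2 * W n + H n + U n.
Proof.
rewrite {1}/S sumS /=.
have -> : \sum_(y <- allw n) gt y ^ 2 = U n.
  by apply: eq_bigr => y _; have := gt_le1 y; case: (gt y) => [|[]].
congr (_ + _).
rewrite /W /H /S big_distrr -!big_split /=.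
by apply: eq_bigr => y _; case: (head false y) => /=; lia.
Qed.

Lemma Uclosed n : U n.+1 = 2 ^ n.
Proof.
elim: n => [|n IH]; first by rewrite /U /S unlock.
by rewrite US HS IH expnS; lia.
Qed.

Lemma Sclosed n : S n.+2 = 3 * 2 ^ n.+1.
Proof.
elim: n => [|n IH]; first by rewrite /U /S unlock.
rewrite SS IH WS HS !Uclosed !expnS; lia.
Qed.

Lemma fibcard n (y : n.-tuple bool) : #|[set x | nib x == y]| = g y.
Proof.
rewrite -sum1dep_card big_mkcond /=.
rewrite (eq_bigr (fun x : n.-tuple bool => ((nib_seq (val x) == val y) : nat))); last first.
  by move=> x _; have -> : (nib_seq (val x) == val y) = (nib x == y) by []; case: (nib x == y).
rewrite (tsum (fun s => ((nib_seq s == val y) : nat))) -(@fib _ _ (size_tuple y)).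
rewrite -sum1_count [RHS]big_mkcond /=; apply: eq_bigr => s _; by case: (nib_seq s == y).
Qed.

Theorem mainTheorem12 (n : nat) : (2 <= n)%N ->
  deg (@nib n) = (3%:R / 2%:R)%R.
Proof.
case: n => [|[|m]] // _.
rewrite /deg (eq_bigr (fun y : (m.+2).-tuple bool => g (val y) ^ 2)); last first.
  by move=> y _; rewrite fibcard.
rewrite (tsum (fun s => g s ^ 2)) -/(S m.+2) Sclosed card_tuple card_bool.
rewrite [in X in (_ / X)%R]expnS natrM natrM.
have h : ((2 ^ m.+1)%:R : rat) != 0%R by rewrite pnatr_eq0 expn_eq0.
by rewrite invfM mulrACA divff // mulr1.
Qed.
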